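(* A class $\mathcal{C}$ of finite complete bipartite graphs is $\mathrm{MSO}_2$-orderable if, and only if, there is a constant $s\in\mathbb{N}$ such that for all $K_{n,m}\in\mathcal{C}$ with $n\le m$ we have $m\le 2^{s(n+1)}$.
   Context: For $G=\langle V,E\rangle$, $\lceil G\rceil=\langle V\cup E,\mathrm{inc}\rangle$ (universe $V\cup E$, incidence relation). An MSO-formula $\varphi(x,y;Z_0,\dots,Z_{k-1})$ defines an order on a class $\mathcal{K}$ of structures if for every non-empty $\mathfrak{A}\in\mathcal{K}$ there are $P_0,\dots,P_{k-1}\subseteq A$ with $\{(a,b):\mathfrak{A}\models\varphi(a,b;\bar P)\}$ a linear order on $A$. A graph class is $\mathrm{MSO}_2$-orderable if some MSO-formula defines an order on $\{\lceil G\rceil : G\in\mathcal{C}\}$. *)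

(* Defs.v *)
From mathcomp Require Import all_boot.
Set Implicit Arguments. Unset Strict Implicit. Unset Printing Implicit Defensive.

Definition is_edge (V : finType) (e : rel V) (E : {set V}) : bool :=
  (#|E| == 2) && [exists x, exists y, [&& x \in E, y \in E & e x y]].

Definition edge_type (V : finType) (e : rel V) : finType :=
  {E : {set V} | is_edge e E}.

(* Universe of  [G] = < V u E, inc > *)
Definition inc_univ (V : finType) (e : rel V) : finType :=
  (V + edge_type e)%type.

Definition inc (V : finType) (e : rel V) : rel (inc_univ e) :=
  fun a b => match a, b with
             | inl v, inr E => v \in val E
             | _, _ => false
             end.

Definition is_Knm (V : finType) (e : rel V) (n m : nat) : Prop :=
  exists A : {set V}, [/\ #|A| = n, #|~: A| = m &
                        forall x y, e x y = ((x \in A) != (y \in A))].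

Inductive mso : Type :=
| MRel of nat & nat
| MEq  of nat & nat
| MIn  of nat & nat
| MNot of mso
| MOr  of mso & mso
| MAnd of mso & mso
| MEx1 of nat & mso
| MAll1 of nat & mso
| MEx2 of nat & mso
| MAll2 of nat & mso.

Definition upd (A : Type) (nu : nat -> A) (i : nat) (a : A) : nat -> A :=
  fun j => if j == i then a else nu j.

Fixpoint sat (T : finType) (R : rel T) (nu1 : nat -> T) (nu2 : nat -> {set T})
  (f : mso) : Prop :=
  match f with
  | MRel x y => R (nu1 x) (nu1 y)
  | MEq x y => nu1 x = nu1 y
  | MIn x X => nu1 x \in nu2 X
  | MNot g => ~ sat R nu1 nu2 g
  | MOr g h => sat R nu1 nu2 g \/ sat R nu1 nu2 h
  | MAnd g h => sat R nu1 nu2 g /\ sat R nu1 nu2 h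
  | MEx1 x g => exists a : T, sat R (upd nu1 x a) nu2 g
  | MAll1 x g => forall a : T, sat R (upd nu1 x a) nu2 g
  | MEx2 X g => exists P : {set T}, sat R nu1 (upd nu2 X P) g
  | MAll2 X g => forall P : {set T}, sat R nu1 (upd nu2 X P) g
  end.

Fixpoint fv1 (f : mso) : seq nat :=
  match f with
  | MRel x y | MEq x y => [:: x; y]
  | MIn x _ => [:: x]
  | MNot g => fv1 g
  | MOr g h | MAnd g h => fv1 g ++ fv1 h
  | MEx1 x g | MAll1 x g => filter (fun i => i != x) (fv1 g)
  | MEx2 _ g | MAll2 _ g => fv1 g
  end.

Fixpoint fv2 (f : mso) : seq nat :=
  match f with
  | MRel _ _ | MEq _ _ => [::]
  | MIn _ X => [:: X]
  | MNot g => fv2 g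
  | MOr g h | MAnd g h => fv2 g ++ fv2 h
  | MEx1 _ g | MAll1 _ g => fv2 g
  | MEx2 X g | MAll2 X g => filter (fun i => i != X) (fv2 g)
  end.

(* phi is a formula phi(x, y; Z_0, ..., Z_{k-1}): its free first-order
   variables are among x = 0, y = 1, its free set variables among 0..k-1. *)
Definition mso_free_in (k : nat) (f : mso) : bool :=
  all (fun i => i < 2) (fv1 f) && all (fun i => i < k) (fv2 f).

Definition linear_order (T : Type) (r : T -> T -> Prop) : Prop :=
  [/\ forall a, r a a,
      forall a b, r a b -> r b a -> a = b,
      forall a b c, r a b -> r b c -> r a c &
      forall a b, r a b \/ r b a].

Definition defined_rel (T : finType) (R : rel T) (k : nat)
  (P : 'I_k -> {set T}) (f : mso) : T -> T -> Prop :=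
  fun a b =>
    sat R (fun i => if i == 0 then a else b)
          (fun i => if insub i is Some j then P j else set0) f.

Definition defines_order_inc (C : forall V : finType, rel V -> Prop)
  (k : nat) (f : mso) : Prop :=
  forall (V : finType) (e : rel V), C V e -> 0 < #|inc_univ e| ->
    exists P : 'I_k -> {set inc_univ e},
      linear_order (defined_rel (@inc V e) P f).

Definition MSO2_orderable (C : forall V : finType, rel V -> Prop) : Prop :=
  exists (k : nat) (f : mso), mso_free_in k f /\ defines_order_inc C k f.

(* Main.v *)
Require Import Defs.
From mathcomp Require Import all_boot.
From mathcomp Require Import zify.
From Stdlib Require Import Classical.
Set Implicit Arguments. Unset Strict Implicit. Unset Printing Implicit Defensive.
Section Inv.
Variables (T : finType) (R : rel T) (sg : T -> T).
Hypothesis sgK : involutive sg.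
Hypothesis sgR : forall x y, R (sg x) (sg y) = R x y.

Lemma sat_inv (f : mso) (nu1 nu1' : nat -> T) (nu2 nu2' : nat -> {set T}) :
  (forall i, nu1' i = sg (nu1 i)) -> (forall i, nu2' i = sg @: nu2 i) ->
  (sat R nu1 nu2 f <-> sat R nu1' nu2' f).
Proof.
have sginj : injective sg := inv_inj sgK.
have imK : forall P : {set T}, sg @: (sg @: P) = P.
  move=> P; rewrite -imset_comp (eq_imset _ sgK) imset_id //.
elim: f nu1 nu1' nu2 nu2' => /=.
- by move=> x y nu1 nu1' nu2 nu2' H1 H2; rewrite !H1 sgR.
- move=> x y nu1 nu1' nu2 nu2' H1 H2; rewrite !H1; split; [by move->|by move/sginj].
- by move=> x X nu1 nu1' nu2 nu2' H1 H2; rewrite H1 H2 mem_imset.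
- move=> g IH nu1 nu1' nu2 nu2' H1 H2; have := IH _ _ _ _ H1 H2; tauto.
- move=> g IHg h IHh nu1 nu1' nu2 nu2' H1 H2.
  have := IHg _ _ _ _ H1 H2; have := IHh _ _ _ _ H1 H2; tauto.
- move=> g IHg h IHh nu1 nu1' nu2 nu2' H1 H2.
  have := IHg _ _ _ _ H1 H2; have := IHh _ _ _ _ H1 H2; tauto.
- move=> x g IH nu1 nu1' nu2 nu2' H1 H2; split=> -[a Ha].
    exists (sg a); apply: (proj1 (IH (upd nu1 x a) _ _ _ _ H2)) Ha => i.
    by rewrite /upd; case: ifP.
  exists (sg a); apply: (proj2 (IH (upd nu1 x (sg a)) (upd nu1' x a) _ _ _ H2)) Ha => i.
  by rewrite /upd; case: ifP => // _; rewrite sgK.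
- move=> x g IH nu1 nu1' nu2 nu2' H1 H2; split=> Ha a.
    apply: (proj1 (IH (upd nu1 x (sg a)) _ _ _ _ H2)) (Ha (sg a)) => i.
    by rewrite /upd; case: ifP => // _; rewrite sgK.
  apply: (proj2 (IH (upd nu1 x a) (upd nu1' x (sg a)) _ _ _ H2)) (Ha (sg a)) => i.
  by rewrite /upd; case: ifP.
- move=> X g IH nu1 nu1' nu2 nu2' H1 H2; split=> -[P HP].
    exists (sg @: P); apply: (proj1 (IH _ _ (upd nu2 X P) _ H1 _)) HP => i.
    by rewrite /upd; case: ifP.
  exists (sg @: P); apply: (proj2 (IH _ _ (upd nu2 X (sg @: P)) (upd nu2' X P) H1 _)) HP => i.
  by rewrite /upd; case: ifP => // _; rewrite imK.
- move=> X g IH nu1 nu1' nu2 nu2' H1 H2; split=> HP P.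
    apply: (proj1 (IH _ _ (upd nu2 X (sg @: P)) _ H1 _)) (HP (sg @: P)) => i.
    by rewrite /upd; case: ifP => // _; rewrite imK.
  apply: (proj2 (IH _ _ (upd nu2 X P) (upd nu2' X (sg @: P)) H1 _)) (HP (sg @: P)) => i.
  by rewrite /upd; case: ifP.
Qed.
End Inv.
Lemma set2_of (T : finType) (E : {set T}) a c :
  #|E| = 2 -> a != c -> a \in E -> c \in E -> E = [set a; c].
Proof.
move=> HE ac Ha Hc; apply/eqP; rewrite eq_sym eqEcard subUset !sub1set Ha Hc /=.
by rewrite cards2 ac HE.
Qed.

Section Swap.
Variables (V : finType) (e : rel V) (A : {set V}).
Hypothesis hA : forall x y, e x y = ((x \in A) != (y \in A)).
Variables (b b' : V).
Hypothesis bA : b \notin A.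
Hypothesis b'A : b' \notin A.

Definition sw v := if v == b then b' else if v == b' then b else v.
Lemma swK : involutive sw.
Proof. move=> v; rewrite /sw.
case: (eqVneq v b) => [->|vb]; first by rewrite eqxx; case: eqVneq.
case: (eqVneq v b') => [->|vb']; first by rewrite eqxx.
by rewrite (negPf vb) (negPf vb').
Qed.
Lemma sw_inj : injective sw. Proof. exact: inv_inj swK. Qed.
Lemma swA v : (sw v \in A) = (v \in A).
Proof. rewrite /sw; case: eqVneq => [->|_]; first by rewrite (negPf bA) (negPf b'A).
case: eqVneq => [->|_] //; by rewrite (negPf bA) (negPf b'A). Qed.

Lemma is_edge_sw (E : edge_type e) : is_edge e (sw @: val E).
Proof.
case: E => E /= /andP[c2 /existsP[x /existsP[y /and3P[xE yE exy]]]].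
apply/andP; split; first by rewrite card_imset //; exact: sw_inj.
apply/existsP; exists (sw x); apply/existsP; exists (sw y).
by rewrite !(mem_imset _ _ sw_inj) xE yE hA !swA -hA.
Qed.

Definition sgm (u : inc_univ e) : inc_univ e :=
  match u with inl v => inl (sw v) | inr E => inr (Sub (sw @: val E) (is_edge_sw E)) end.

Lemma imswK (E : {set V}) : sw @: (sw @: E) = E.
Proof. by rewrite -imset_comp (eq_imset _ swK) imset_id. Qed.

Lemma sgmK : involutive sgm.
Proof.
case=> [v|E] /=; first by rewrite swK.
congr inr; apply: val_inj => /=; exact: imswK.
Qed.

Lemma sgm_inc x y : inc (sgm x) (sgm y) = inc x y.
Proof. case: x => [v|E]; case: y => [w|F] //=; rewrite mem_imset //; exact: sw_inj. Qed.

End Swap.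

Lemma partner (V : finType) (e : rel V) (A : {set V})
  (hA : forall x y, e x y = ((x \in A) != (y \in A))) (E : edge_type e) c :
  c \in val E -> exists a, [/\ a \in val E, a != c & (a \in A) != (c \in A)].
Proof.
case: E => E /= /andP[/eqP c2 /existsP[x /existsP[y /and3P[xE yE exy]]]] cE.
have xy : x != y by apply: contraTneq exy => ->; rewrite hA eqxx.
have HE := set2_of c2 xy xE yE.
move: cE; rewrite HE !inE => /orP[]/eqP->.
  exists y; split; first by rewrite !inE eqxx orbT.
    by rewrite eq_sym.
  by rewrite eq_sym -hA.
exists x; split; first by rewrite !inE eqxx.
  by [].
by rewrite -hA.
Qed.

Lemma edge_uniq (V : finType) (e : rel V) (E F : edge_type e) a c :
  a != c -> a \in val E -> c \in val E -> a \in val F -> c \in val F -> E = F.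
Proof.
move=> ac aE cE aF cF; apply: val_inj.
case: E aE cE => E /= /andP[/eqP c2 _] aE cE.
case: F aF cF => F /= /andP[/eqP c2' _] aF cF.
by rewrite (set2_of c2 ac aE cE) (set2_of c2' ac aF cF).
Qed.

Definition tp (V : finType) (e : rel V) (A : {set V}) k (P : 'I_k -> {set inc_univ e})
  (v : V) : {ffun 'I_k * option {x | x \in A} -> bool} :=
  [ffun p => match p.2 with
             | None => (inl v : inc_univ e) \in P p.1
             | Some a => [exists E : edge_type e,
                 [&& val a \in val E, v \in val E & (inr E : inc_univ e) \in P p.1]] end].

Lemma no_twins (V : finType) (e : rel V) (A : {set V})
  (hA : forall x y, e x y = ((x \in A) != (y \in A))) k (P : 'I_k -> {set inc_univ e})
  (f : mso) b b' :
  b \notin A -> b' \notin A -> b != b' -> tp A P b = tp A P b' ->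
  linear_order (defined_rel (@inc V e) P f) -> False.
Proof.
move=> bA b'A bb' Htp [Hr Has Htr Hto].
have HtpE : tp A P b =1 tp A P b' by apply/ffunP.
set sg := sgm hA bA b'A.
have sgK : involutive sg := sgmK hA bA b'A.
have sginj : injective sg := inv_inj sgK.
have edgeP : forall j (E : edge_type e) c (a : {x | x \in A}),
    c \notin A -> val a \in val E -> c \in val E ->
    ((inr E : inc_univ e) \in P j) = tp A P c (j, Some a).
  move=> j E c a cA aE cE; rewrite ffunE /=.
  have ac : val a != c by apply: contraNneq cA => <-; exact: (valP a).
  apply/idP/existsP => [H|[F /and3P[aF cF HF]]]; first by exists E; rewrite aE cE H.
  by rewrite (edge_uniq ac aE cE aF cF).
have fixP : forall j u, (sg u \in P j) = (u \in P j).
  move=> j [v|E] /=.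
  - rewrite /sw; case: eqVneq => [->|_].
      by have := HtpE (j, None); rewrite !ffunE /= => ->.
    case: eqVneq => [->|_] //.
    by have := HtpE (j, None); rewrite !ffunE /= => ->.
  - have key : forall c, c \in [:: b; b'] -> c \in val E ->
        ((inr (Sub (sw b b' @: val E) (is_edge_sw hA bA b'A E)) : inc_univ e) \in P j)
        = ((inr E : inc_univ e) \in P j).
      move=> c cbb cE.
      have cA : c \notin A by move: cbb; rewrite !inE => /orP[]/eqP->.
      have [a [aE ac aAc]] := partner hA cE.
      have aA : a \in A by move: aAc; rewrite (negPf cA); case: (a \in A).
      pose a' : {x | x \in A} := exist _ a aA.
      have swc : tp A P (sw b b' c) = tp A P c.
        move: cbb; rewrite !inE /sw => /orP[]/eqP->; rewrite eqxx //.
        by case: eqVneq => // _; rewrite eqxx.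
      have swa : sw b b' a = a.
        rewrite /sw; case: eqVneq => [ab|_]; first by have := aA; rewrite ab (negPf bA).
        case: eqVneq => [ab|_] //; by have := aA; rewrite ab (negPf b'A).
      rewrite (edgeP j (Sub (sw b b' @: val E) (is_edge_sw hA bA b'A E)) (sw b b' c) a') /=; last 3 first.
      - by rewrite swA.
      - by rewrite /= -{1}swa (mem_imset _ _ (@sw_inj V b b')).
      - by rewrite (mem_imset _ _ (@sw_inj V b b')).
      by rewrite swc (edgeP j E c a').
    case bE: (b \in val E); first by apply: (key b) => //; rewrite inE eqxx.
    case b'E: (b' \in val E); first by apply: (key b') => //; rewrite !inE eqxx orbT.
    suff -> : (Sub (sw b b' @: val E) (is_edge_sw hA bA b'A E) : edge_type e) = E by [].
    apply: val_inj => /=.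
    rewrite -[RHS]imset_id; apply: eq_in_imset => v vE; rewrite /sw.
    case: eqVneq => [vb|_]; first by rewrite -vb vE in bE.
    case: eqVneq => [vb|_] //; by rewrite -vb vE in b'E.
have fixS : forall j, sg @: P j = P j.
  move=> j; apply/setP => u; rewrite -{1}(sgK u) mem_imset //; exact: fixP.
have inv : forall x y, defined_rel (@inc V e) P f x y <-> defined_rel (@inc V e) P f (sg x) (sg y).
  move=> x y; apply: (sat_inv sgK (sgm_inc hA bA b'A)).
    by move=> i; case: ifP.
  move=> i; case: insubP => [j _ _|_]; first by rewrite fixS.
  by rewrite imset0.
have sgb : sg (inl b) = inl b' by rewrite /sg /= /sw eqxx.
have sgb' : sg (inl b') = inl b by rewrite /sg /= /sw eq_sym (negPf bb') eqxx.
have [H|H] := Hto (inl b) (inl b').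
  have H' := proj1 (inv _ _) H; rewrite sgb sgb' in H'.
  by move: (Has _ _ H H') => [] /eqP; rewrite (negPf bb').
have H' := proj1 (inv _ _) H; rewrite sgb sgb' in H'.
by move: (Has _ _ H H') => [] /eqP; rewrite eq_sym (negPf bb').
Qed.

Lemma bound_of_order (V : finType) (e : rel V) (A : {set V})
  (hA : forall x y, e x y = ((x \in A) != (y \in A))) k (P : 'I_k -> {set inc_univ e})
  (f : mso) :
  linear_order (defined_rel (@inc V e) P f) -> #|~: A| <= 2 ^ (k * (#|A| + 1)).
Proof.
move=> Hlin.
pose g (x : {x | x \in ~: A}) := tp A P (val x).
have [/injectiveP ginj|/injectivePn [x [y xy gxy]]] := boolP (injectiveb g).
  have := leq_card _ ginj.
  rewrite card_sig card_ffun card_bool card_prod card_ord card_option card_sig.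
  by rewrite addn1.
exfalso; apply: (no_twins hA _ _ _ gxy Hlin).
- by have := valP x; rewrite inE.
- by have := valP y; rewrite inE.
- by apply: contra xy => /eqP H; apply/eqP/val_inj.
Qed.

Lemma dir1 (C : forall V : finType, rel V -> Prop) :
  MSO2_orderable C ->
  exists s : nat, forall (V : finType) (e : rel V) (n m : nat),
    C V e -> is_Knm e n m -> n <= m -> m <= 2 ^ (s * (n + 1)).
Proof.
move=> [k [f [_ Hdef]]]; exists k => V e n m CVe [A [hn hm hA]] nm.
case: m hm nm => [|m] hm nm; first by [].
have pos : 0 < #|inc_univ e|.
  rewrite card_sum; apply: leq_trans (leq_addr _ _).
  by apply: leq_trans (max_card (mem (~: A))); rewrite hm.
have [P Hlin] := Hdef V e CVe pos.
by rewrite -hm -hn; exact: bound_of_order hA _ _ _ Hlin.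
Qed.
Definition bitn (x i : nat) : bool := odd (x %/ 2 ^ i).

Lemma bitn_eq N : forall X Y, X < 2 ^ N -> Y < 2 ^ N ->
  (forall i, i < N -> bitn X i = bitn Y i) -> X = Y.
Proof.
elim: N => [|N IH] X Y.
  by rewrite expn0 !ltnS !leqn0 => /eqP-> /eqP->.
move=> HX HY Hb.
have h0 := Hb 0 isT; rewrite /bitn expn0 !divn1 in h0.
have -> : X = X./2.*2 + odd X by rewrite -{1}(odd_double_half X) addnC.
have -> : Y = Y./2.*2 + odd Y by rewrite -{1}(odd_double_half Y) addnC.
rewrite h0 (IH X./2 Y./2) //.
- by rewrite -divn2 ltn_divLR // -expnSr.
- by rewrite -divn2 ltn_divLR // -expnSr.
move=> i iN; have := Hb i.+1 iN; rewrite /bitn -!divn2 -!divnMA expnS mulnC //.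
Qed.

Lemma decomp s i : 0 < s -> s <= i -> exists q j, j < s /\ i = s * q.+1 + j.
Proof.
move=> s0 si; exists (i %/ s).-1, (i %% s); split; first by rewrite ltn_mod.
have q0 : 0 < i %/ s by rewrite divn_gt0.
by rewrite prednK // mulnC -divn_eq.
Qed.

Lemma lt_decomp s q j q' j' : j < s -> j' < s ->
  s * q'.+1 + j' < s * q.+1 + j -> q' < q \/ (q' = q /\ j' < j).
Proof. move=> js j's H; nia. Qed.

Lemma lt_decomp2 s q j q' j' : j < s -> j' < s ->
  q' < q -> s * q'.+1 + j' < s * q.+1 + j.
Proof. move=> js j's H; nia. Qed.

Lemma fd_arith s n (bx by_ : nat -> bool) :
  (exists i, [/\ i < s * (n + 1), ~~ bx i, by_ i & forall i', i' < i -> bx i' = by_ i'])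
  <-> (exists j, [/\ j < s, ~~ bx j, by_ j & forall j', j' < j -> bx j' = by_ j'])
   \/ (exists q j, [/\ q < n, j < s, ~~ bx (s * q.+1 + j), by_ (s * q.+1 + j) &
        [/\ forall j', j' < s -> bx j' = by_ j',
            forall q' j', q' < q -> j' < s -> bx (s * q'.+1 + j') = by_ (s * q'.+1 + j') &
            forall j', j' < j -> bx (s * q.+1 + j') = by_ (s * q.+1 + j')]]).
Proof.
split.
  move=> [i [iN h1 h2 h3]].
  case: (ltnP i s) => iS; first by left; exists i.
  have s0 : 0 < s by case: s iN iS {h3} => //; rewrite mul0n.
  have [q [j [js Ei]]] := decomp s0 iS; subst i.
  right; exists q, j; split => //.
    by move: iN; rewrite addn1 => iN; nia.
  split.
  - move=> j' j's; apply: h3; nia.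
  - move=> q' j' q'q j's; apply: h3; exact: lt_decomp2.
  - move=> j' j'j; apply: h3; nia.
move=> [[j [js h1 h2 h3]]|[q [j [qn js h1 h2 [h3 h4 h5]]]]].
  exists j; split => //; nia.
exists (s * q.+1 + j); split => //; first by nia.
move=> i' i'i; case: (ltnP i' s) => i's; first exact: h3.
have s0 : 0 < s by case: s js {h1 h2 h3 h4 h5 i'i i's}.
have [q' [j' [j's Ei]]] := decomp s0 i's; subst i'.
case: (lt_decomp js j's i'i) => [q'q|[-> j'j]]; [exact: h4|exact: h5].
Qed.

Definition fdb N X Y := [exists i : 'I_N, [&& ~~ bitn X i, bitn Y i &
   [forall i' : 'I_N, (i' < i) ==> (bitn X i' == bitn Y i')]]].

Lemma fdbP N X Y : reflect (exists i, [/\ i < N, ~~ bitn X i, bitn Y i &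
   forall i', i' < i -> bitn X i' = bitn Y i']) (fdb N X Y).
Proof.
apply: (iffP existsP) => [[i /and3P[h1 h2 /forallP h3]]|[i [iN h1 h2 h3]]].
  exists i; split => // i' i'i; have i'N : i' < N by apply: ltn_trans i'i _.
  by have /implyP/(_ i'i)/eqP := h3 (Ordinal i'N).
exists (Ordinal iN); rewrite h1 h2 /=; apply/forallP => i'; apply/implyP => H.
by rewrite (h3 _ H).
Qed.

Lemma fdb_irr N X : ~~ fdb N X X.
Proof. by apply/fdbP => -[i [_ h1 h2 _]]; rewrite h2 in h1. Qed.

Lemma fdb_trans N X Y Z : fdb N X Y -> fdb N Y Z -> fdb N X Z.
Proof.
move=> /fdbP[i [iN h1 h2 h3]] /fdbP[i' [i'N h1' h2' h3']]; apply/fdbP.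
case: (ltngtP i i') => [ii'|i'i|ii'].
- exists i; split => //; first by rewrite -(h3' _ ii').
  by move=> k ki; rewrite h3 // h3' // (ltn_trans ki ii').
- exists i'; split => //; first by rewrite h3.
  by move=> k ki; rewrite h3 ?h3' // (ltn_trans ki i'i).
- by subst; rewrite h2 in h1'.
Qed.

Lemma fdb_total N X Y : X < 2 ^ N -> Y < 2 ^ N -> X != Y -> fdb N X Y || fdb N Y X.
Proof.
move=> HX HY XY.
have ex : exists i, (i < N) && (bitn X i != bitn Y i).
  apply: NNPP => Hn; move/eqP: XY; apply; apply: (bitn_eq HX HY) => i iN.
  apply/eqP; apply: contraT => Hd; exfalso; apply: Hn; exists i; by rewrite iN.
case: (ex_minnP ex) => i /andP[iN Hd] Hmin.
have agree : forall i', i' < i -> bitn X i' = bitn Y i'.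
  move=> i' i'i; apply/eqP; apply: contraT => Hd'.
  have := Hmin i'; rewrite Hd' (ltn_trans i'i iN) => /(_ isT); by rewrite leqNgt i'i.
case bX: (bitn X i).
  apply/orP; right; apply/fdbP; exists i; split => //; first by move: Hd; rewrite bX; case: (bitn Y i).
  by move=> k ki; rewrite agree.
apply/orP; left; apply/fdbP; exists i; split => //; first by rewrite bX.
  by move: Hd; rewrite bX; case: (bitn Y i).
Qed.

Section Key.
Variables (T : finType) (D : {pred T}) (lt : rel T).
Hypothesis irr : forall x, ~~ lt x x.
Hypothesis tr : forall x y z, lt x y -> lt y z -> lt x z.
Hypothesis tot : {in D &, forall x y, x != y -> lt x y || lt y x}.
Definition keyof x := #|[set y in D | lt y x]|.

Lemma keyof_lt_impl x y : x \in D -> lt x y -> keyof x < keyof y.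
Proof.
move=> xD lxy; apply: proper_card; apply/properP; split.
  apply/subsetP => z; rewrite !inE => /andP[-> /= lzx]; exact: tr lzx lxy.
by exists x; rewrite !inE ?xD ?lxy ?(negPf (irr x)).
Qed.

Lemma keyof_lt x y : x \in D -> y \in D -> lt x y = (keyof x < keyof y).
Proof.
move=> xD yD; apply/idP/idP; first exact: keyof_lt_impl.
move=> H; case: (eqVneq x y) => [exy|nxy]; first by move: H; rewrite exy ltnn.
have /orP[//|lyx] := tot xD yD nxy.
by have := keyof_lt_impl yD lyx; rewrite ltnNge (ltnW H).
Qed.

Lemma keyof_inj x y : x \in D -> y \in D -> keyof x = keyof y -> x = y.
Proof.
move=> xD yD Hk; apply/eqP; apply: contraT => nxy.
have /orP[H|H] := tot xD yD nxy.
  by move: H; rewrite keyof_lt // Hk ltnn.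
by move: H; rewrite keyof_lt // Hk ltnn.
Qed.
End Key.



Lemma index_surj (T : eqType) (s : seq T) q : uniq s -> q < size s ->
  exists x, x \in s /\ index x s = q.
Proof.
elim: s q => [|x s IH] [|q] //= /andP[xs us] H; first by exists x; rewrite inE eqxx; split => //=; rewrite eqxx.
have [y [ys iy]] := IH q us H.
exists y; rewrite inE ys orbT; split => //=.
case: eqVneq => [xy|_]; last by rewrite iy.
by move: xs; rewrite xy ys.
Qed.

Definition TT := MEq 0 0.
Fixpoint bigAnd (fs : seq mso) : mso :=
  if fs is f :: fs' then MAnd f (bigAnd fs') else TT.
Fixpoint bigOr (fs : seq mso) : mso :=
  if fs is f :: fs' then MOr f (bigOr fs') else MNot TT.
Definition MImp f g := MOr (MNot f) g.
Definition MIff f g := MAnd (MImp f g) (MImp g f).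

Lemma sat_bigAnd (T : finType) (R : rel T) nu1 nu2 (g : nat -> mso) (l : seq nat) :
  sat R nu1 nu2 (bigAnd (map g l)) <-> (forall j, j \in l -> sat R nu1 nu2 (g j)).
Proof.
elim: l => [|j l IH] /=; first by split.
rewrite IH; split => [[H1 H2] i|H]; first by rewrite inE => /orP[/eqP->|/H2].
by split; [apply: H; rewrite inE eqxx|move=> i il; apply: H; rewrite inE il orbT].
Qed.

Lemma sat_bigOr (T : finType) (R : rel T) nu1 nu2 (g : nat -> mso) (l : seq nat) :
  sat R nu1 nu2 (bigOr (map g l)) <-> (exists j, j \in l /\ sat R nu1 nu2 (g j)).
Proof.
elim: l => [|j l IH] /=; first by split => [H|[j []]]; [exfalso; apply: H|].
rewrite IH; split => [[H|[i [il H]]]|[i [il H]]].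
- by exists j; rewrite inE eqxx.
- by exists i; rewrite inE il orbT.
- by move: il; rewrite inE => /orP[/eqP<-|il]; [left|right; exists i].
Qed.

Lemma sat_imp (T : finType) (R : rel T) nu1 nu2 f g :
  sat R nu1 nu2 (MImp f g) <-> (sat R nu1 nu2 f -> sat R nu1 nu2 g).
Proof. rewrite /=; tauto. Qed.

Lemma sat_iff (T : finType) (R : rel T) nu1 nu2 f g :
  sat R nu1 nu2 (MIff f g) <-> (sat R nu1 nu2 f <-> sat R nu1 nu2 g).
Proof. rewrite /=; tauto. Qed.

Lemma updE (A : Type) (nu : nat -> A) x a : upd nu x a x = a.
Proof. by rewrite /upd eqxx. Qed.
Lemma updN (A : Type) (nu : nat -> A) x y a : y != x -> upd nu x a y = nu y.
Proof. by rewrite /upd => /negPf->. Qed.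

Section Construction.
Variables (V : finType) (e : rel V) (A : {set V}).
Hypothesis hA : forall x y, e x y = ((x \in A) != (y \in A)).
Variable s : nat.
Local Notation n := #|A|.
Local Notation m := #|~: A|.
Hypothesis nm : n <= m.
Hypothesis mbound : m <= 2 ^ (s * (n + 1)).
Local Notation U := (inc_univ e).
Local Notation N := (s * (n + 1)).

Definition rA v := index v (enum A).
Definition rB v := index v (enum (~: A)).

Lemma rA_lt v : v \in A -> rA v < n.
Proof. by move=> vA; rewrite /rA cardE index_mem mem_enum. Qed.
Lemma rB_lt v : v \notin A -> rB v < m.
Proof. by move=> vA; rewrite /rB cardE index_mem mem_enum inE. Qed.
Lemma rA_inj v w : v \in A -> w \in A -> rA v = rA w -> v = w.
Proof. by move=> vA wA; apply: (@index_inj _ v (enum A) v w); rewrite mem_enum. Qed.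
Lemma rB_inj v w : v \notin A -> w \notin A -> rB v = rB w -> v = w.
Proof. by move=> vA wA; apply: (@index_inj _ v (enum (~: A)) v w); rewrite mem_enum inE. Qed.
Lemma rA_surj q : q < n -> exists a, a \in A /\ rA a = q.
Proof.
move=> qn; have qs : q < size (enum A) by rewrite -cardE.
have [x [xs ix]] := @index_surj _ (enum A) q (enum_uniq _) qs.
by exists x; rewrite -mem_enum.
Qed.
Lemma rB_surj q : q < m -> exists b, b \notin A /\ rB b = q.
Proof.
move=> qn; have qs : q < size (enum (~: A)) by rewrite -cardE.
have [x [xs ix]] := @index_surj _ (enum (~: A)) q (enum_uniq _) qs.
by exists x; move: xs; rewrite mem_enum inE.
Qed.

Lemma isedge_ab a b : a \in A -> b \notin A -> is_edge e [set a; b].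
Proof.
move=> aA bA; have ab : a != b by apply: contraNneq bA => <-.
apply/andP; split; first by rewrite cards2 ab.
apply/existsP; exists a; apply/existsP; exists b.
by rewrite !inE !eqxx orbT hA aA (negPf bA).
Qed.

Definition mkE a b (aA : a \in A) (bA : b \notin A) : edge_type e :=
  Sub [set a; b] (isedge_ab aA bA).

Lemma edge_shape (E : edge_type e) : exists a b, [/\ a \in A, b \notin A & val E = [set a; b]].
Proof.
case: E => E /= /andP[/eqP c2 /existsP[x /existsP[y /and3P[xE yE exy]]]].
have xy : x != y by apply: contraTneq exy => ->; rewrite hA eqxx.
have HE := set2_of c2 xy xE yE.
move: exy; rewrite hA; case xA: (x \in A); case yA: (y \in A) => // _.
  by exists x, y; rewrite xA yA.
by exists y, x; rewrite yA xA HE setUC.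
Qed.

Lemma endA (E : edge_type e) a0 b0 a : b0 \notin A -> val E = [set a0; b0] ->
  a \in A -> a \in val E -> a = a0.
Proof.
move=> b0A -> aA; rewrite !inE => /orP[/eqP//|/eqP ab].
by move: aA; rewrite ab (negPf b0A).
Qed.
Lemma endB (E : edge_type e) a0 b0 b : a0 \in A -> val E = [set a0; b0] ->
  b \notin A -> b \in val E -> b = b0.
Proof.
move=> a0A -> bA; rewrite !inE => /orP[/eqP ab|/eqP//].
by move: bA; rewrite ab a0A.
Qed.

Lemma pairP (E : edge_type e) a0 b0 (P : V -> V -> bool) :
  a0 \in A -> b0 \notin A -> val E = [set a0; b0] ->
  [exists p : V * V, [&& p.1 \in A, p.2 \notin A, p.1 \in val E, p.2 \in val E & P p.1 p.2]]
  = P a0 b0.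
Proof.
move=> a0A b0A HE; apply/existsP/idP => [[[a b] /and5P[/= aA bA aE bE H]]|H].
  by rewrite -(endA b0A HE aA aE) -(endB a0A HE bA bE).
by exists (a0, b0); rewrite /= a0A b0A HE !inE !eqxx orbT H.
Qed.

Lemma edge_between a b (aA : a \in A) (bA : b \notin A) (u : U) :
  inc (inl a) u -> inc (inl b) u -> u = inr (mkE aA bA).
Proof.
case: u => // E /= aE bE; congr inr; apply: val_inj => /=.
have [a0 [b0 [a0A b0A HE]]] := edge_shape E.
by rewrite HE -(endA b0A HE aA aE) -(endB a0A HE bA bE).
Qed.

Definition isAs (u : U) := if u is inl v then v \in A else false.
Definition isEs (u : U) := if u is inr _ then true else false.
Definition isBs (u : U) := if u is inl v then v \notin A else false.

Definition XA : {set U} := [set u | isAs u].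
Definition HH : {set U} := [set u : U | if u is inr E then
  [exists p : V * V, [&& p.1 \in A, p.2 \notin A, p.1 \in val E, p.2 \in val E &
     rB p.2 <= rA p.1]] else false].
Definition ZZ j : {set U} := [set u : U | match u with
  | inl v => (v \notin A) && bitn (rB v) j
  | inr E => [exists p : V * V, [&& p.1 \in A, p.2 \notin A, p.1 \in val E, p.2 \in val E &
     bitn (rB p.2) (s * (rA p.1).+1 + j)]] end].

Lemma mkE_shape a b (aA : a \in A) (bA : b \notin A) : val (mkE aA bA) = [set a; b].
Proof. by []. Qed.

Lemma HH_ab a b (aA : a \in A) (bA : b \notin A) :
  (inr (mkE aA bA) \in HH) = (rB b <= rA a).
Proof. by rewrite inE (pairP (fun a b => rB b <= rA a) aA bA (mkE_shape aA bA)). Qed.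

Lemma ZZ_ab j a b (aA : a \in A) (bA : b \notin A) :
  (inr (mkE aA bA) \in ZZ j) = bitn (rB b) (s * (rA a).+1 + j).
Proof. by rewrite inE (pairP (fun a b => bitn (rB b) (s * (rA a).+1 + j)) aA bA (mkE_shape aA bA)). Qed.


Definition isAf x := MIn x 0.
Definition isEf x := MEx1 100 (MRel 100 x).
Definition isBf x := MAnd (MNot (isAf x)) (MNot (isEf x)).
Definition inXf X a b := MEx1 101 (MAnd (MRel a 101) (MAnd (MRel b 101) (MIn 101 X))).
Definition leAf x y := MAll1 102 (MImp (MNot (isAf 102)) (MImp (inXf 1 x 102) (inXf 1 y 102))).
Definition ltAf x y := MAnd (leAf x y) (MNot (MEq x y)).
Definition bitSf x j := MIn x j.+2.
Definition bitEf p x j := inXf j.+2 p x.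
Definition agS x y j := MIff (bitSf x j) (bitSf y j).
Definition agE p x y j := MIff (bitEf p x j) (bitEf p y j).

Section Sem.
Variable nu2 : nat -> {set U}.
Hypothesis good0 : nu2 0 = XA.
Hypothesis good1 : nu2 1 = HH.
Hypothesis goodZ : forall j, j < s -> nu2 j.+2 = ZZ j.

Local Notation sat := (sat (@inc V e)).

Lemma s_isA nu x : sat nu nu2 (isAf x) <-> isAs (nu x).
Proof. by rewrite /= good0 inE. Qed.

Lemma s_isE nu x : x != 100 -> (sat nu nu2 (isEf x) <-> isEs (nu x)).
Proof.
move=> x100 /=; split => [[a]|].
  by rewrite updE updN //; case: (nu x) => //; case: a.
case Hx: (nu x) => [//|E] _.
have [a0 [b0 [a0A _ HE]]] := edge_shape E.
by exists (inl a0); rewrite updE updN // Hx /= HE !inE eqxx.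
Qed.

Lemma s_isB nu x : x != 100 -> (sat nu nu2 (isBf x) <-> isBs (nu x)).
Proof.
move=> x100; change (~ sat nu nu2 (isAf x) /\ ~ sat nu nu2 (isEf x) <-> isBs (nu x)).
rewrite s_isA s_isE //; case: (nu x) => [v|E] /=; first case: (v \in A).
- by split => // -[/(_ isT)].
- by split => // _; split.
- by split => // -[_ /(_ isT)].
Qed.

Lemma s_inX nu X a b : a != 101 -> b != 101 ->
  (sat nu nu2 (inXf X a b) <-> exists u, [/\ inc (nu a) u, inc (nu b) u & u \in nu2 X]).
Proof.
move=> a1 b1 /=; split=> [[u]|[u [h1 h2 h3]]].
  by rewrite !updE !updN // => -[h1 [h2 h3]]; exists u.
by exists u; rewrite !updE !updN.
Qed.

Lemma s_inXab nu X a b va vb (vaA : va \in A) (vbA : vb \notin A) :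
  a != 101 -> b != 101 -> nu a = inl va -> nu b = inl vb ->
  (sat nu nu2 (inXf X a b) <-> inr (mkE vaA vbA) \in nu2 X).
Proof.
move=> a1 b1 ha hb; rewrite s_inX // ha hb; split => [[u [h1 h2 h3]]|H].
  by rewrite -(edge_between vaA vbA h1 h2).
by exists (inr (mkE vaA vbA)); rewrite /= !inE !eqxx orbT.
Qed.

Lemma s_leA nu x y a a' (aA : a \in A) (a'A : a' \in A) :
  x != 101 -> x != 102 -> y != 101 -> y != 102 -> nu x = inl a -> nu y = inl a' ->
  (sat nu nu2 (leAf x y) <-> rA a <= rA a').
Proof.
move=> x1 x2 y1 y2 hx hy.
have Ez : forall z, sat (upd nu 102 z) nu2 (MImp (MNot (isAf 102)) (MImp (inXf 1 x 102) (inXf 1 y 102)))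
   <-> (~ isAs z -> sat (upd nu 102 z) nu2 (inXf 1 x 102) -> sat (upd nu 102 z) nu2 (inXf 1 y 102)).
  move=> z; rewrite sat_imp sat_imp.
  change (~ sat (upd nu 102 z) nu2 (isAf 102)) with (sat (upd nu 102 z) nu2 (MNot (isAf 102))).
  by rewrite /= good0 inE updE.
change (sat nu nu2 (leAf x y)) with (forall z, sat (upd nu 102 z) nu2
   (MImp (MNot (isAf 102)) (MImp (inXf 1 x 102) (inXf 1 y 102)))).
split.
  move=> H.
  have [b [bA rb]] := rB_surj (leq_trans (rA_lt aA) nm).
  have := proj1 (Ez (inl b)) (H (inl b)).
  move/(_ (negP bA)).
  rewrite (@s_inXab (upd nu 102 (inl b)) 1 x 102 a b aA bA) ?updE ?updN //.
  rewrite (@s_inXab (upd nu 102 (inl b)) 1 y 102 a' b a'A bA) ?updE ?updN //.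
  by rewrite good1 !HH_ab rb leqnn => /(_ isT).
move=> Hle z; apply/Ez; case: z => [b|E].
  move=> nA; have bA' : b \notin A by apply/negP.
  rewrite (@s_inXab (upd nu 102 (inl b)) 1 x 102 a b aA bA') ?updE ?updN //.
  rewrite (@s_inXab (upd nu 102 (inl b)) 1 y 102 a' b a'A bA') ?updE ?updN //.
  by rewrite good1 !HH_ab => H; apply: leq_trans H Hle.
move=> _; rewrite s_inX ?updE ?updN // => -[u [_ h _]].
by move: h; case: u.
Qed.

Lemma s_ltA nu x y a a' (aA : a \in A) (a'A : a' \in A) :
  x != 101 -> x != 102 -> y != 101 -> y != 102 -> nu x = inl a -> nu y = inl a' ->
  (sat nu nu2 (ltAf x y) <-> rA a < rA a').
Proof.
move=> x1 x2 y1 y2 hx hy.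
change (sat nu nu2 (leAf x y) /\ ~ (nu x = nu y) <-> rA a < rA a').
rewrite (s_leA aA a'A x1 x2 y1 y2 hx hy) hx hy ltn_neqAle.
split => [[-> H]|/andP[H ->]]; last by split => // -[] aa'; move: H; rewrite aa' eqxx.
rewrite andbT; apply/eqP => H'; apply: H; by rewrite (rA_inj aA a'A H').
Qed.

Lemma s_bitS nu x b j : b \notin A -> j < s -> nu x = inl b ->
  (sat nu nu2 (bitSf x j) <-> bitn (rB b) j).
Proof. by move=> bA js hx; rewrite /= goodZ // hx inE bA. Qed.

Lemma s_bitE nu p x a b j (aA : a \in A) (bA : b \notin A) :
  p != 101 -> x != 101 -> j < s -> nu p = inl a -> nu x = inl b ->
  (sat nu nu2 (bitEf p x j) <-> bitn (rB b) (s * (rA a).+1 + j)).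
Proof.
move=> p1 x1 js hp hx; rewrite /bitEf (@s_inXab nu j.+2 p x a b aA bA p1 x1 hp hx).
by rewrite goodZ // ZZ_ab.
Qed.

Definition FD1f x y := bigOr (map (fun j => MAnd (MNot (bitSf x j))
   (MAnd (bitSf y j) (bigAnd (map (agS x y) (iota 0 j))))) (iota 0 s)).
Definition FD2body x y j := MAnd (MNot (bitEf 103 x j)) (MAnd (bitEf 103 y j)
   (MAnd (bigAnd (map (agS x y) (iota 0 s)))
   (MAnd (MAll1 104 (MImp (isAf 104) (MImp (ltAf 104 103) (bigAnd (map (agE 104 x y) (iota 0 s))))))
         (bigAnd (map (agE 103 x y) (iota 0 j)))))).
Definition FD2f x y := MEx1 103 (MAnd (isAf 103) (bigOr (map (FD2body x y) (iota 0 s)))).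
Definition FDf x y := MOr (FD1f x y) (FD2f x y).

Lemma bool_iff (b1 b2 : bool) : (b1 <-> b2) <-> b1 = b2.
Proof. by split => [[h1 h2]|->]; [apply/idP/idP|]. Qed.

Lemma s_agS nu x y b b' j : b \notin A -> b' \notin A -> j < s -> nu x = inl b -> nu y = inl b' ->
  (sat nu nu2 (agS x y j) <-> bitn (rB b) j = bitn (rB b') j).
Proof.
move=> bA b'A js hx hy; rewrite /agS sat_iff (s_bitS bA js hx) (s_bitS b'A js hy).
exact: bool_iff.
Qed.

Lemma s_agE nu p x y a b b' j (aA : a \in A) (bA : b \notin A) (b'A : b' \notin A) :
  p != 101 -> x != 101 -> y != 101 -> j < s -> nu p = inl a -> nu x = inl b -> nu y = inl b' ->
  (sat nu nu2 (agE p x y j) <->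
     bitn (rB b) (s * (rA a).+1 + j) = bitn (rB b') (s * (rA a).+1 + j)).
Proof.
move=> p1 x1 y1 js hp hx hy; rewrite /agE sat_iff.
rewrite (s_bitE aA bA p1 x1 js hp hx) (s_bitE aA b'A p1 y1 js hp hy).
exact: bool_iff.
Qed.

Lemma s_FD1 nu x y b b' : b \notin A -> b' \notin A -> nu x = inl b -> nu y = inl b' ->
  (sat nu nu2 (FD1f x y) <-> exists j, [/\ j < s, ~~ bitn (rB b) j, bitn (rB b') j &
     forall j', j' < j -> bitn (rB b) j' = bitn (rB b') j']).
Proof.
move=> bA b'A hx hy; rewrite /FD1f sat_bigOr; split.
  move=> [j [jin [H1 [H2 H3]]]].
  have js : j < s by move: jin; rewrite mem_iota.
  change (~ sat nu nu2 (bitSf x j)) in H1; change (sat nu nu2 (bitSf y j)) in H2.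
  change (sat nu nu2 (bigAnd (map (agS x y) (iota 0 j)))) in H3.
  rewrite (s_bitS bA js hx) in H1; rewrite (s_bitS b'A js hy) in H2.
  rewrite sat_bigAnd in H3.
  exists j; split => //; first by apply/negP.
  move=> j' j'j; have j's : j' < s by apply: ltn_trans js.
  by apply/(s_agS bA b'A j's hx hy)/H3; rewrite mem_iota.
move=> [j [js H1 H2 H3]]; exists j; split; first by rewrite mem_iota.
split; first by move=> /(s_bitS bA js hx); apply/negP.
split; first exact/(s_bitS b'A js hy).
apply/sat_bigAnd => j'; rewrite mem_iota /= => j'j.
have j's : j' < s by apply: ltn_trans js.
by apply/(s_agS bA b'A j's hx hy); apply: H3.
Qed.

Lemma s_FD2 nu x y b b' : b \notin A -> b' \notin A -> nu x = inl b -> nu y = inl b' ->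
  x != 101 -> x != 102 -> x != 103 -> x != 104 ->
  y != 101 -> y != 102 -> y != 103 -> y != 104 ->
  (sat nu nu2 (FD2f x y) <-> exists q j, [/\ q < n, j < s, ~~ bitn (rB b) (s * q.+1 + j),
        bitn (rB b') (s * q.+1 + j) &
        [/\ forall j', j' < s -> bitn (rB b) j' = bitn (rB b') j',
            forall q' j', q' < q -> j' < s ->
               bitn (rB b) (s * q'.+1 + j') = bitn (rB b') (s * q'.+1 + j') &
            forall j', j' < j ->
               bitn (rB b) (s * q.+1 + j') = bitn (rB b') (s * q.+1 + j')]]).
Proof.
move=> bA b'A hx hy x1 x2 x3 x4 y1 y2 y3 y4.
have Hsub : forall a (aA : a \in A) j, j < s ->
   (sat (upd nu 103 (inl a)) nu2 (FD2body x y j) <->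
    [/\ ~~ bitn (rB b) (s * (rA a).+1 + j), bitn (rB b') (s * (rA a).+1 + j) &
        [/\ forall j', j' < s -> bitn (rB b) j' = bitn (rB b') j',
            forall q' j', q' < rA a -> j' < s ->
               bitn (rB b) (s * q'.+1 + j') = bitn (rB b') (s * q'.+1 + j') &
            forall j', j' < j ->
               bitn (rB b) (s * (rA a).+1 + j') = bitn (rB b') (s * (rA a).+1 + j')]]).
  move=> a aA j js.
  set nu' := upd nu 103 (inl a).
  have hx' : nu' x = inl b by rewrite /nu' updN.
  have hy' : nu' y = inl b' by rewrite /nu' updN.
  have ha : nu' 103 = inl a by rewrite /nu' updE.
  have Q4 : forall q' j', q' < rA a -> j' < s ->
     (sat nu' nu2 (MAll1 104 (MImp (isAf 104) (MImp (ltAf 104 103)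
        (bigAnd (map (agE 104 x y) (iota 0 s)))))) ->
      bitn (rB b) (s * q'.+1 + j') = bitn (rB b') (s * q'.+1 + j')).
    move=> q' j' q'q j's H.
    have [a' [a'A ra']] := rA_surj (ltn_trans q'q (rA_lt aA)).
    have ltaa : rA a' < rA a by rewrite ra'.
    have H' : sat (upd nu' 104 (inl a')) nu2 (MImp (isAf 104) (MImp (ltAf 104 103)
        (bigAnd (map (agE 104 x y) (iota 0 s))))) := H (inl a').
    move: H'; rewrite sat_imp sat_imp s_isA updE => /(_ a'A).
    rewrite (@s_ltA _ 104 103 a' a a'A aA) ?updE ?updN // => /(_ ltaa).
    have ji : j' \in iota 0 s by rewrite mem_iota.
    rewrite sat_bigAnd => /(_ j' ji).
    by rewrite (@s_agE _ 104 x y a' b b' j' a'A bA b'A) ?updE ?updN // ra'.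
  split.
    case=> H1 [H2 [H3 [H4 H5]]].
    change (~ sat nu' nu2 (bitEf 103 x j)) in H1.
    change (sat nu' nu2 (bitEf 103 y j)) in H2.
    change (sat nu' nu2 (bigAnd (map (agS x y) (iota 0 s)))) in H3.
    change (sat nu' nu2 (bigAnd (map (agE 103 x y) (iota 0 j)))) in H5.
    rewrite (s_bitE aA bA _ _ js ha hx') // in H1.
    rewrite (s_bitE aA b'A _ _ js ha hy') // in H2.
    rewrite sat_bigAnd in H3; rewrite sat_bigAnd in H5.
    split => //; first by apply/negP.
    split.
    - move=> j' j's; apply/(s_agS bA b'A j's hx' hy')/H3; by rewrite mem_iota.
    - by move=> q' j' q'q j's; apply: Q4 H4.
    - move=> j' j'j; have j's : j' < s by apply: ltn_trans js.
      by apply/(s_agE aA bA b'A _ _ _ j's ha hx' hy')/H5; rewrite ?mem_iota.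
  case=> H1 H2 [H3 H4 H5].
  split; first by move=> /(s_bitE aA bA _ _ js ha hx') H; rewrite H in H1.
  split; first exact/(s_bitE aA b'A _ _ js ha hy').
  split.
    apply/sat_bigAnd => j'; rewrite mem_iota /= => j's.
    exact/(s_agS bA b'A j's hx' hy')/H3.
  split.
    move=> z; change (sat (upd nu' 104 z) nu2 (MImp (isAf 104) (MImp (ltAf 104 103)
        (bigAnd (map (agE 104 x y) (iota 0 s)))))).
    rewrite sat_imp sat_imp s_isA updE; case: z => [a' a'A|//].
    rewrite (@s_ltA _ 104 103 a' a a'A aA) ?updE ?updN // => lt.
    apply/sat_bigAnd => j' ji; have j's : j' < s by move: ji; rewrite mem_iota.
    rewrite (@s_agE _ 104 x y a' b b' j' a'A bA b'A) ?updE ?updN //.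
    exact: H4.
  apply/sat_bigAnd => j' ji; have j'j : j' < j by move: ji; rewrite mem_iota.
  have j's : j' < s by apply: ltn_trans js.
  by rewrite (@s_agE nu' 103 x y a b b' j' aA bA b'A) //; exact: H5.
split.
  case=> z [Hz H].
  change (sat (upd nu 103 z) nu2 (isAf 103)) in Hz.
  rewrite s_isA updE in Hz.
  case: z Hz H => [a|//] /= aA H.
  change (sat (upd nu 103 (inl a)) nu2 (bigOr (map (FD2body x y) (iota 0 s)))) in H.
  rewrite sat_bigOr in H; case: H => j [jin Hb].
  have js : j < s by move: jin; rewrite mem_iota.
  have [h1 h2 h3] := proj1 (Hsub a aA j js) Hb.
  by exists (rA a), j; split => //; exact: rA_lt.
case=> q [j [qn js h1 h2 h3]].
have [a [aA ra]] := rA_surj qn.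
exists (inl a); split; first by apply/s_isA; rewrite updE.
change (sat (upd nu 103 (inl a)) nu2 (bigOr (map (FD2body x y) (iota 0 s)))).
apply/sat_bigOr; exists j; split; first by rewrite mem_iota.
by apply/(Hsub a aA j js); rewrite ra.
Qed.

Lemma s_FD nu x y b b' : b \notin A -> b' \notin A -> nu x = inl b -> nu y = inl b' ->
  x != 101 -> x != 102 -> x != 103 -> x != 104 ->
  y != 101 -> y != 102 -> y != 103 -> y != 104 ->
  (sat nu nu2 (FDf x y) <-> fdb N (rB b) (rB b')).
Proof.
move=> bA b'A hx hy x1 x2 x3 x4 y1 y2 y3 y4.
change (sat nu nu2 (FD1f x y) \/ sat nu nu2 (FD2f x y) <-> fdb N (rB b) (rB b')).
rewrite (s_FD1 bA b'A hx hy) (s_FD2 bA b'A hx hy) //.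
rewrite -(fd_arith s n (bitn (rB b)) (bitn (rB b'))).
by split => [H|/fdbP//]; apply/fdbP.
Qed.

Definition ltB (v w : V) : bool := fdb N (rB v) (rB w).
Definition kB (v : V) : nat := keyof (~: A) ltB v.

Lemma ltB_tot : {in ~: A &, forall x y, x != y -> ltB x y || ltB y x}.
Proof.
move=> x y; rewrite !inE => xA yA xy; apply: fdb_total.
- exact: leq_trans (rB_lt xA) mbound.
- exact: leq_trans (rB_lt yA) mbound.
- by apply: contra xy => /eqP/(rB_inj xA yA)->.
Qed.

Lemma ltB_tr x y z : ltB x y -> ltB y z -> ltB x z.
Proof. exact: fdb_trans. Qed.
Lemma ltB_irr x : ~~ ltB x x.
Proof. exact: fdb_irr. Qed.

Lemma kB_lt v w : v \notin A -> w \notin A -> ltB v w = (kB v < kB w).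
Proof.
move=> vA wA; apply: (@keyof_lt V (~: A) ltB ltB_irr ltB_tr ltB_tot); by rewrite inE.
Qed.

Lemma kB_inj v w : v \notin A -> w \notin A -> kB v = kB w -> v = w.
Proof.
move=> vA wA; apply: (@keyof_inj V (~: A) ltB ltB_irr ltB_tr ltB_tot); by rewrite inE.
Qed.

Lemma kB_bound v : v \notin A -> kB v < m.
Proof.
move=> vA; rewrite /kB /keyof; apply: proper_card; apply/properP; split.
  by apply/subsetP => z; rewrite inE => /andP[].
by exists v; rewrite !inE ?vA // (negPf (ltB_irr v)) andbF.
Qed.

Definition eP (E : edge_type e) : option (V * V) :=
  [pick p : V * V | [&& p.1 \in A, p.2 \notin A, p.1 \in val E & p.2 \in val E]].

Definition key (u : U) : nat :=
  match u with
  | inl v => if v \in A then rA v else n + kB v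
  | inr E => if eP E is Some p then n + m + kB p.2 * n + rA p.1 else 0
  end.

Lemma edge_mkE (E : edge_type e) : exists a b (aA : a \in A) (bA : b \notin A), E = mkE aA bA.
Proof.
have [a [b [aA bA HE]]] := edge_shape E.
by exists a, b, aA, bA; apply: val_inj; rewrite HE.
Qed.

Lemma key_edge a b (aA : a \in A) (bA : b \notin A) :
  key (inr (mkE aA bA)) = n + m + kB b * n + rA a.
Proof.
rewrite /= /eP; case: pickP => [[a' b'] /and4P[/= a'A b'A a'E b'E]|/(_ (a, b))].
  by rewrite (endA bA (mkE_shape aA bA) a'A a'E) (endB aA (mkE_shape aA bA) b'A b'E).
by rewrite /= aA bA !inE !eqxx orbT.
Qed.

Lemma qr_uniq q r q' r' d : r < d -> r' < d -> q * d + r = q' * d + r' -> q = q' /\ r = r'.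
Proof.
move=> rd r'd H.
have d0 : 0 < d by apply: leq_ltn_trans rd.
have Hq : q = q' by have := congr1 (divn^~ d) H; rewrite !divnMDl // !divn_small // !addn0.
by split => //; move: H; rewrite Hq => /addnI.
Qed.

Lemma key_A v : v \in A -> key (inl v) = rA v.
Proof. by move=> vA; rewrite /= vA. Qed.
Lemma key_B v : v \notin A -> key (inl v) = n + kB v.
Proof. by move=> vA; rewrite /= (negPf vA). Qed.

Lemma key_inj u w : key u = key w -> u = w.
Proof.
have Hv : forall v, v \in A \/ v \notin A by move=> v; case: (v \in A); [left|right].
case: u => [v|E]; case: w => [v'|E'].
- case: (Hv v) => vA; case: (Hv v') => v'A.
  + by rewrite (key_A vA) (key_A v'A) => /(rA_inj vA v'A) ->.
  + rewrite (key_A vA) (key_B v'A) => H; have := rA_lt vA; by rewrite H ltnNge leq_addr.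
  + rewrite (key_A v'A) (key_B vA) => H; have := rA_lt v'A; by rewrite -H ltnNge leq_addr.
  + by rewrite (key_B vA) (key_B v'A) => /addnI /(kB_inj vA v'A) ->.
- have [a [b [aA [bA ->]]]] := edge_mkE E'; rewrite key_edge => H; exfalso.
  have : key (inl v) < n + m.
    case: (Hv v) => vA; first by rewrite key_A //; apply: ltn_addr; exact: rA_lt.
    by rewrite key_B // ltn_add2l; exact: kB_bound.
  by rewrite H -addnA ltnNge leq_addr.
- have [a [b [aA [bA ->]]]] := edge_mkE E; rewrite key_edge => H; exfalso.
  have : key (inl v') < n + m.
    case: (Hv v') => vA; first by rewrite key_A //; apply: ltn_addr; exact: rA_lt.
    by rewrite key_B // ltn_add2l; exact: kB_bound.
  by rewrite -H -addnA ltnNge leq_addr.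
- have [a [b [aA [bA ->]]]] := edge_mkE E; have [a' [b' [a'A [b'A ->]]]] := edge_mkE E'.
  rewrite !key_edge -!addnA => /addnI /addnI H.
  have [/(kB_inj bA b'A) eb /(rA_inj aA a'A) ea] := qr_uniq (rA_lt aA) (rA_lt a'A) H.
  subst; congr inr; exact: val_inj.
Qed.

Definition edgeLef := MEx1 105 (MEx1 106 (MEx1 107 (MEx1 108
  (MAnd (isAf 105) (MAnd (isBf 106) (MAnd (MRel 105 0) (MAnd (MRel 106 0)
  (MAnd (isAf 107) (MAnd (isBf 108) (MAnd (MRel 107 1) (MAnd (MRel 108 1)
  (MOr (FDf 106 108) (MAnd (MEq 106 108) (leAf 105 107)))))))))))))).

Lemma vA_of a b (aA : a \in A) (bA : b \notin A) z :
  isAs z -> inc z (inr (mkE aA bA)) -> z = inl a.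
Proof. case: z => [v|E] //= vA vE; congr inl; exact: (endA bA (mkE_shape aA bA) vA vE). Qed.
Lemma vB_of a b (aA : a \in A) (bA : b \notin A) z :
  isBs z -> inc z (inr (mkE aA bA)) -> z = inl b.
Proof. case: z => [v|E] //= vA vE; congr inl; exact: (endB aA (mkE_shape aA bA) vA vE). Qed.

Lemma s_edgeLe nu a b a' b' (aA : a \in A) (bA : b \notin A) (a'A : a' \in A) (b'A : b' \notin A) :
  nu 0 = inr (mkE aA bA) -> nu 1 = inr (mkE a'A b'A) ->
  (sat nu nu2 edgeLef <-> ltB b b' \/ (b = b' /\ rA a <= rA a')).
Proof.
move=> h0 h1.
have Hnu : forall z1 z2 z3 z4, let nu' := upd (upd (upd (upd nu 105 z1) 106 z2) 107 z3) 108 z4 in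
   [/\ nu' 0 = nu 0, nu' 1 = nu 1, nu' 105 = z1, nu' 106 = z2 & [/\ nu' 107 = z3 & nu' 108 = z4]].
  by move=> z1 z2 z3 z4 /=; rewrite /upd /=.
split.
  case=> z1 [z2 [z3 [z4 H]]].
  pose nu' := upd (upd (upd (upd nu 105 z1) 106 z2) 107 z3) 108 z4.
  have [e0 e1 e5 e6 [e7 e8]] : [/\ nu' 0 = nu 0, nu' 1 = nu 1, nu' 105 = z1, nu' 106 = z2 &
     [/\ nu' 107 = z3 & nu' 108 = z4]] := Hnu z1 z2 z3 z4.
  case: H => h5 [h6 [r5 [r6 [h7 [h8 [r7 [r8 h9]]]]]]].
  change (sat nu' nu2 (isAf 105)) in h5; rewrite s_isA e5 in h5.
  change (sat nu' nu2 (isAf 107)) in h7; rewrite s_isA e7 in h7.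
  change (sat nu' nu2 (isBf 106)) in h6; rewrite s_isB // e6 in h6.
  change (sat nu' nu2 (isBf 108)) in h8; rewrite s_isB // e8 in h8.
  change (is_true (inc (nu' 105) (nu' 0))) in r5; rewrite e5 e0 h0 in r5.
  change (is_true (inc (nu' 106) (nu' 0))) in r6; rewrite e6 e0 h0 in r6.
  change (is_true (inc (nu' 107) (nu' 1))) in r7; rewrite e7 e1 h1 in r7.
  change (is_true (inc (nu' 108) (nu' 1))) in r8; rewrite e8 e1 h1 in r8.
  have z1a := vA_of h5 r5; have z2b := vB_of h6 r6.
  have z3a := vA_of h7 r7; have z4b := vB_of h8 r8.
  have f6 : nu' 106 = inl b by rewrite e6.
  have f8 : nu' 108 = inl b' by rewrite e8.
  have f5 : nu' 105 = inl a by rewrite e5.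
  have f7 : nu' 107 = inl a' by rewrite e7.
  change (sat nu' nu2 (FDf 106 108) \/ (nu' 106 = nu' 108 /\ sat nu' nu2 (leAf 105 107))) in h9.
  case: h9 => [h9|[h9 h10]].
    by left; move: h9; rewrite (s_FD bA b'A f6 f8).
  right; split; first by move: h9; rewrite f6 f8 => -[].
  by move: h10; rewrite (s_leA aA a'A _ _ _ _ f5 f7).
move=> H; exists (inl a), (inl b), (inl a'), (inl b').
pose nu' := upd (upd (upd (upd nu 105 (inl a)) 106 (inl b)) 107 (inl a')) 108 (inl b').
have [e0 e1 e5 e6 [e7 e8]] : [/\ nu' 0 = nu 0, nu' 1 = nu 1, nu' 105 = inl a, nu' 106 = inl b &
   [/\ nu' 107 = inl a' & nu' 108 = inl b']] := Hnu _ _ _ _.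
change (sat nu' nu2 (MAnd (isAf 105) (MAnd (isBf 106) (MAnd (MRel 105 0) (MAnd (MRel 106 0)
  (MAnd (isAf 107) (MAnd (isBf 108) (MAnd (MRel 107 1) (MAnd (MRel 108 1)
  (MOr (FDf 106 108) (MAnd (MEq 106 108) (leAf 105 107)))))))))))).
split; first by apply/s_isA; rewrite e5.
split; first by apply/s_isB; rewrite ?e6.
split; first by change (is_true (inc (nu' 105) (nu' 0))); rewrite e5 e0 h0 /= !inE eqxx.
split; first by change (is_true (inc (nu' 106) (nu' 0))); rewrite e6 e0 h0 /= !inE eqxx orbT.
split; first by apply/s_isA; rewrite e7.
split; first by apply/s_isB; rewrite ?e8.
split; first by change (is_true (inc (nu' 107) (nu' 1))); rewrite e7 e1 h1 /= !inE eqxx.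
split; first by change (is_true (inc (nu' 108) (nu' 1))); rewrite e8 e1 h1 /= !inE eqxx orbT.
change (sat nu' nu2 (FDf 106 108) \/ (nu' 106 = nu' 108 /\ sat nu' nu2 (leAf 105 107))).
case: H => [H|[eb ea]].
  by left; rewrite (s_FD bA b'A e6 e8).
right; split; first by rewrite e6 e8 eb.
by rewrite (s_leA aA a'A _ _ _ _ e5 e7).
Qed.

Definition P1f := MAnd (isAf 0) (MAnd (isAf 1) (leAf 0 1)).
Definition P2f := MAnd (isAf 0) (MNot (isAf 1)).
Definition P3f := MAnd (isBf 0) (MAnd (isBf 1) (MOr (MEq 0 1) (FDf 0 1))).
Definition P4f := MAnd (isBf 0) (isEf 1).
Definition P5f := MAnd (isEf 0) (MAnd (isEf 1) edgeLef).
Definition phi := MOr P1f (MOr P2f (MOr P3f (MOr P4f P5f))).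

Lemma lex_le q r q' r' d : r < d -> r' < d ->
  (q * d + r <= q' * d + r') = (q < q') || ((q == q') && (r <= r')).
Proof.
move=> rd r'd; case: (ltngtP q q') => [qq|qq|->] /=.
- apply/idP; apply: leq_trans (ltnW (_ : q * d + r < q.+1 * d)) _; first by rewrite mulSn addnC ltn_add2r.
  by apply: leq_trans (leq_addr _ _); rewrite leq_mul2r qq orbT.
- apply/negbTE; rewrite -ltnNge.
  apply: leq_trans (_ : q'.+1 * d <= q * d + r); first by rewrite mulSn addnC ltn_add2r.
  by apply: leq_trans (leq_addr _ _); rewrite leq_mul2r qq orbT.
- by rewrite leq_add2l.
Qed.

Section Phi.
Variables (u w : U).
Local Notation nu := (fun i : nat => if i == 0 then u else w).

Lemma pieceA : isAs u -> isAs w -> (sat nu nu2 (leAf 0 1) <-> key u <= key w).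
Proof.
case: u => [a|//] aA; case: w => [a'|//] a'A.
by rewrite (s_leA aA a'A) // (key_A aA) (key_A a'A).
Qed.

Lemma pieceB : isBs u -> isBs w -> (nu 0 = nu 1 \/ sat nu nu2 (FDf 0 1) <-> key u <= key w).
Proof.
case: u => [b|//] bA; case: w => [b'|//] b'A.
rewrite (s_FD bA b'A) // (key_B bA) (key_B b'A) leq_add2l leq_eqVlt -(kB_lt bA b'A) /ltB /=.
split => [[[->]|->]|/orP[/eqP/(kB_inj bA b'A)->|->]].
- by rewrite eqxx.
- by rewrite orbT.
- by left.
- by right.
Qed.

Lemma pieceE : isEs u -> isEs w -> (sat nu nu2 edgeLef <-> key u <= key w).
Proof.
case: u => [//|E] _; case: w => [//|E'] _.
have [a [b [aA [bA eE]]]] := edge_mkE E; have [a' [b' [a'A [b'A eE']]]] := edge_mkE E'.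
rewrite (@s_edgeLe _ a b a' b' aA bA a'A b'A); last 2 first.
- by rewrite /= eE.
- by rewrite /= eE'.
rewrite eE eE' !key_edge -!addnA leq_add2l leq_add2l.
rewrite lex_le ?rA_lt // -(kB_lt bA b'A).
split => [[->//|[-> ->]]|/orP[->|/andP[/eqP/(kB_inj bA b'A) -> ->]]]; last by right.
  by rewrite eqxx orbT.
by left.
Qed.

Lemma sem_phi : sat nu nu2 phi <-> key u <= key w.
Proof.
change (sat nu nu2 P1f \/ sat nu nu2 P2f \/ sat nu nu2 P3f \/ sat nu nu2 P4f \/ sat nu nu2 P5f
  <-> key u <= key w).
have e1 : sat nu nu2 P1f <-> [/\ isAs u, isAs w & key u <= key w].
  change (sat nu nu2 (isAf 0) /\ sat nu nu2 (isAf 1) /\ sat nu nu2 (leAf 0 1) <-> [/\ isAs u, isAs w & key u <= key w]).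
  rewrite !s_isA /=; split => [[h1 [h2 h3]]|[h1 h2 h3]].
    by split => //; apply/(pieceA h1 h2).
  by split => //; split => //; apply/(pieceA h1 h2).
have e2 : sat nu nu2 P2f <-> isAs u /\ ~ isAs w.
  change (sat nu nu2 (isAf 0) /\ ~ sat nu nu2 (isAf 1) <-> isAs u /\ ~ isAs w); by rewrite !s_isA.
have e3 : sat nu nu2 P3f <-> [/\ isBs u, isBs w & key u <= key w].
  change (sat nu nu2 (isBf 0) /\ sat nu nu2 (isBf 1) /\ (nu 0 = nu 1 \/ sat nu nu2 (FDf 0 1)) <-> [/\ isBs u, isBs w & key u <= key w]).
  rewrite !s_isB //=; split => [[h1 [h2 h3]]|[h1 h2 h3]].
    by split => //; apply/(pieceB h1 h2).
  by split => //; split => //; apply/(pieceB h1 h2).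
have e4 : sat nu nu2 P4f <-> isBs u /\ isEs w.
  change (sat nu nu2 (isBf 0) /\ sat nu nu2 (isEf 1) <-> isBs u /\ isEs w); by rewrite s_isB // s_isE.
have e5 : sat nu nu2 P5f <-> [/\ isEs u, isEs w & key u <= key w].
  change (sat nu nu2 (isEf 0) /\ sat nu nu2 (isEf 1) /\ sat nu nu2 edgeLef <-> [/\ isEs u, isEs w & key u <= key w]).
  rewrite !s_isE //=; split => [[h1 [h2 h3]]|[h1 h2 h3]].
    by split => //; apply/(pieceE h1 h2).
  by split => //; split => //; apply/(pieceE h1 h2).
rewrite e1 e2 e3 e4 e5.
have kAlt : forall v, v \in A -> key (inl v) < n by move=> v vA; rewrite key_A // rA_lt.
have kBlt : forall v, v \notin A -> n <= key (inl v) < n + m.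
  by move=> v vA; rewrite key_B // leq_addr ltn_add2l kB_bound.
have kEge : forall E, n + m <= key (inr E).
  by move=> E; have [a [b [aA [bA ->]]]] := edge_mkE E; rewrite key_edge -!addnA leq_add2l leq_addr.
case: u => [v|E]; case: w => [v'|E']; simpl isAs; simpl isBs; simpl isEs.
- case vA: (v \in A); case v'A: (v' \in A) => /=.
  + by split => [[[_ _ //]|[[_ //]|[[//]|[[//]|[//]]]]]|H]; left.
  + split => [_|_]; last by right; left; split.
    by apply: leq_trans (ltnW (kAlt _ vA)) _; case/andP: (kBlt v' (negbT v'A)).
  + split => [[[//]|[[//]|[[//]|[[//]|[//]]]]]|H]; exfalso.
    have := kAlt _ v'A; case/andP: (kBlt v (negbT vA)) => H1 _ H2.
    by move: (leq_trans H1 H); rewrite leqNgt H2.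
  + by split => [[[//]|[[_ //]|[[_ _ //]|[[_ //]|[//]]]]]|H]; right; right; left.
- case vA: (v \in A) => /=.
  + split => [_|_]; last by right; left.
    apply: leq_trans (kEge E'); apply: leq_trans (ltnW (kAlt _ vA)) _; exact: leq_addr.
  + split => [_|_]; last by right; right; right; left.
    by case/andP: (kBlt v (negbT vA)) => _ /ltnW H; apply: leq_trans H (kEge E').
- case v'A: (v' \in A) => /=.
  + split => [[[//]|[[//]|[[//]|[[//]|[//]]]]]|H]; exfalso.
    by have := leq_trans (kEge E) H; rewrite leqNgt (leq_trans (kAlt _ v'A) (leq_addr _ _)).
  + split => [[[//]|[[//]|[[//]|[[//]|[//]]]]]|H]; exfalso.
    by case/andP: (kBlt v' (negbT v'A)) => _ H'; have := leq_trans (kEge E) H; rewrite leqNgt H'.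
- by split => [[[//]|[[//]|[[//]|[[//]|[_ _ //]]]]]|H]; right; right; right; right.
Qed.
End Phi.

End Sem.
End Construction.

Definition ok1 (L : seq nat) f := all (fun i => i \in L) (fv1 f).
Definition ok2 (K : nat) f := all (fun i => i < K) (fv2 f).

Lemma ok1_and (L : seq nat) f g : ok1 L f -> ok1 L g -> ok1 L (MAnd f g).
Proof. by rewrite /ok1 /= all_cat => -> ->. Qed.
Lemma ok1_or (L : seq nat) f g : ok1 L f -> ok1 L g -> ok1 L (MOr f g).
Proof. by rewrite /ok1 /= all_cat => -> ->. Qed.
Lemma ok1_not (L : seq nat) f : ok1 L f -> ok1 L (MNot f).
Proof. exact: id. Qed.
Lemma ok1_ex1 (L : seq nat) x f : ok1 (x :: L) f -> ok1 L (MEx1 x f).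
Proof.
rewrite /ok1; change (all (fun i => i \in x :: L) (fv1 f) ->
  all (fun i => i \in L) (filter (fun i => i != x) (fv1 f))).
move=> /allP H; apply/allP => i; rewrite mem_filter => /andP[ix /H].
by rewrite inE (negPf ix).
Qed.
Lemma ok1_all1 (L : seq nat) x f : ok1 (x :: L) f -> ok1 L (MAll1 x f).
Proof.
rewrite /ok1; change (all (fun i => i \in x :: L) (fv1 f) ->
  all (fun i => i \in L) (filter (fun i => i != x) (fv1 f))).
move=> /allP H; apply/allP => i; rewrite mem_filter => /andP[ix /H].
by rewrite inE (negPf ix).
Qed.
Lemma ok1_bigAnd (L : seq nat) (g : nat -> mso) (l : seq nat) : 0 \in L -> (forall j, j \in l -> ok1 L (g j)) -> ok1 L (bigAnd (map g l)).
Proof.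
move=> L0; elim: l => [|j l IH] H /=; first by rewrite /ok1 /= L0.
apply: ok1_and; first by apply: H; rewrite inE eqxx.
by apply: IH => i il; apply: H; rewrite inE il orbT.
Qed.
Lemma ok1_bigOr (L : seq nat) (g : nat -> mso) (l : seq nat) : 0 \in L -> (forall j, j \in l -> ok1 L (g j)) -> ok1 L (bigOr (map g l)).
Proof.
move=> L0; elim: l => [|j l IH] H /=; first by rewrite /ok1 /= L0.
apply: ok1_or; first by apply: H; rewrite inE eqxx.
by apply: IH => i il; apply: H; rewrite inE il orbT.
Qed.

Lemma ok2_and K f g : ok2 K f -> ok2 K g -> ok2 K (MAnd f g).
Proof. by rewrite /ok2 /= all_cat => -> ->. Qed.
Lemma ok2_or K f g : ok2 K f -> ok2 K g -> ok2 K (MOr f g).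
Proof. by rewrite /ok2 /= all_cat => -> ->. Qed.
Lemma ok2_not K f : ok2 K f -> ok2 K (MNot f).
Proof. exact: id. Qed.
Lemma ok2_ex1 K x f : ok2 K f -> ok2 K (MEx1 x f).
Proof. exact: id. Qed.
Lemma ok2_all1 K x f : ok2 K f -> ok2 K (MAll1 x f).
Proof. exact: id. Qed.
Lemma ok2_bigAnd K (g : nat -> mso) (l : seq nat) : (forall j, j \in l -> ok2 K (g j)) -> ok2 K (bigAnd (map g l)).
Proof.
elim: l => [|j l IH] H /=; first by [].
apply: ok2_and; first by apply: H; rewrite inE eqxx.
by apply: IH => i il; apply: H; rewrite inE il orbT.
Qed.
Lemma ok2_bigOr K (g : nat -> mso) (l : seq nat) : (forall j, j \in l -> ok2 K (g j)) -> ok2 K (bigOr (map g l)).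
Proof.
elim: l => [|j l IH] H /=; first by [].
apply: ok2_or; first by apply: H; rewrite inE eqxx.
by apply: IH => i il; apply: H; rewrite inE il orbT.
Qed.

Ltac ok1_tac := repeat first
  [ apply: ok1_bigAnd => //; move=> ? _
  | apply: ok1_bigOr => //; move=> ? _
  | apply: ok1_and | apply: ok1_or | apply: ok1_not | apply: ok1_ex1 | apply: ok1_all1
  | by [] ].

Lemma phi_ok1 s : ok1 [:: 0; 1] (phi s).
Proof.
rewrite /phi /P1f /P2f /P3f /P4f /P5f /edgeLef /FDf /FD1f /FD2f /FD2body /agS /agE /bitSf /bitEf
  /leAf /ltAf /inXf /isAf /isBf /isEf /MIff /MImp /TT.
ok1_tac.
Qed.

Ltac ok2_tac := repeat first
  [ apply: ok2_bigAnd; let j := fresh "j" in move=> j; rewrite mem_iota => /andP[_ ?]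
  | apply: ok2_bigOr; let j := fresh "j" in move=> j; rewrite mem_iota => /andP[_ ?]
  | apply: ok2_and | apply: ok2_or | apply: ok2_not | apply: ok2_ex1 | apply: ok2_all1
  | by rewrite /ok2 /= ?andbT; lia ].

Lemma phi_ok2 s : ok2 s.+2 (phi s).
Proof.
rewrite /phi /P1f /P2f /P3f /P4f /P5f /edgeLef /FDf /FD1f /FD2f /FD2body /agS /agE /bitSf /bitEf
  /leAf /ltAf /inXf /isAf /isBf /isEf /MIff /MImp /TT.
ok2_tac.
Qed.

Lemma phi_free s : mso_free_in s.+2 (phi s).
Proof.
apply/andP; split; last exact: phi_ok2.
have := phi_ok1 s; rewrite /ok1 => /allP H; apply/allP => i /H.
by rewrite !inE => /orP[]/eqP->.
Qed.

Lemma order_for (V : finType) (e : rel V) (A : {set V})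
  (hA : forall x y, e x y = ((x \in A) != (y \in A))) s :
  #|A| <= #|~: A| -> #|~: A| <= 2 ^ (s * (#|A| + 1)) ->
  exists P : 'I_s.+2 -> {set inc_univ e}, linear_order (defined_rel (@inc V e) P (phi s)).
Proof.
move=> nm mb.
pose P (i : 'I_s.+2) : {set inc_univ e} :=
  if val i == 0 then XA e A else if val i == 1 then HH e A else ZZ e A s (val i).-2.
exists P.
pose nu2 := fun i => if insub i is Some j then P j else set0.
have goodP : forall i (Hi : i < s.+2), nu2 i = P (Ordinal Hi).
  by move=> i Hi; rewrite /nu2 insubT.
have g0 : nu2 0 = XA e A by rewrite (goodP 0 isT).
have g1 : nu2 1 = HH e A by rewrite (goodP 1 isT).
have gZ : forall j, j < s -> nu2 j.+2 = ZZ e A s j.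
  by move=> j js; rewrite (goodP j.+2 js).
have H : forall a b, defined_rel (@inc V e) P (phi s) a b <-> key A s a <= key A s b.
  move=> a b; exact: (sem_phi hA nm mb g0 g1 gZ a b).
split.
- by move=> a; apply/H.
- move=> a b /H h1 /H h2; apply: (key_inj hA mb); by apply/eqP; rewrite eqn_leq h1 h2.
- move=> a b c /H h1 /H h2; apply/H; exact: leq_trans h1 h2.
- move=> a b; case: (leqP (key A s a) (key A s b)) => h; [left; apply/H|right; apply/H] => //.
  exact: ltnW.
Qed.

Lemma dir2 (C : forall V : finType, rel V -> Prop)
  (HC : forall (V : finType) (e : rel V), C V e -> exists n m, is_Knm e n m) :
  (exists s : nat, forall (V : finType) (e : rel V) (n m : nat),
    C V e -> is_Knm e n m -> n <= m -> m <= 2 ^ (s * (n + 1))) -> MSO2_orderable C.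
Proof.
move=> [s Hs]; exists s.+2, (phi s); split; first exact: phi_free.
move=> V e CVe _.
have [n [m [A0 [hn hm hA0]]]] := HC V e CVe.
have [A [hA nm]] : exists A : {set V}, (forall x y, e x y = ((x \in A) != (y \in A))) /\ #|A| <= #|~: A|.
  case: (leqP #|A0| #|~: A0|) => h; first by exists A0.
  exists (~: A0); split; last by rewrite setCK ltnW.
  by move=> x y; rewrite !inE hA0; case: (x \in A0); case: (y \in A0).
have mb : #|~: A| <= 2 ^ (s * (#|A| + 1)).
  by apply: (Hs V e) => //; exists A.
exact: order_for hA s nm mb.
Qed.

Theorem lemma4p26 (C : forall V : finType, rel V -> Prop)
  (HC : forall (V : finType) (e : rel V), C V e -> exists n m, is_Knm e n m) :
  MSO2_orderable C <->
  exists s : nat, forall (V : finType) (e : rel V) (n m : nat),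
    C V e -> is_Knm e n m -> n <= m -> m <= 2 ^ (s * (n + 1)).
Proof. split; [exact: dir1|exact: dir2]. Qed.
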